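(* For all $0\le\lambda<1$ and $0\le d<1$ there is a number $f(\lambda,d)<1$, depending only on $\lambda$ and $d$, with the following property. Let $H$ be a finite-dimensional complex Hilbert space, $U:H\to H$ unitary and $A:H\to H$ Hermitian such that $1$ is an eigenvalue of $A$ and every other eigenvalue $\mu$ of $A$ satisfies $|\mu|\le\lambda$. Let $A_{\max}$ be the eigenspace of $A$ for the eigenvalue $1$ and $P_{\max}$ the orthogonal projection onto $A_{\max}$, and assume $\|P_{\max}Uv\|\le d\|v\|$ for all $v\in A_{\max}$. Then the spectral radius of $UA$ is at most $f(\lambda,d)$. *)

(* Defs.v *)
From mathcomp Require Import all_boot all_order all_algebra.
From mathcomp Require Import complex reals.
Set Implicit Arguments. Unset Strict Implicit. Unset Printing Implicit Defensive.
Import Order.TTheory GRing.Theory Num.Theory.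
Local Open Scope ring_scope.
Local Open Scope complex_scope.

(* H = C^n with C = R[i] (complex numbers over a real field R : realType),
   standard inner product; vectors are column vectors 'cV_n and an operator
   M acts by v |-> M *m v. *)

Section Defs.
Variable R : realType.

Definition adjmx m n (M : 'M[R[i]]_(m, n)) : 'M[R[i]]_(n, m) :=
  (map_mx Num.conj M)^T.
Definition unitary_op n (U : 'M[R[i]]_n) : Prop := U *m adjmx U = 1%:M.
Definition hermitian_op n (A : 'M[R[i]]_n) : Prop := adjmx A = A.

Definition vnorm n (v : 'cV[R[i]]_n) : R[i] := sqrtC (\sum_i `|v i 0| ^+ 2).

Definition is_eigenvalue n (M : 'M[R[i]]_n) (mu : R[i]) : Prop :=
  exists2 v : 'cV[R[i]]_n, v != 0 & M *m v = mu *: v.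

Definition eigenspace_pred n (M : 'M[R[i]]_n) (mu : R[i]) (v : 'cV[R[i]]_n) : Prop :=
  M *m v = mu *: v.

Definition orth_proj_onto n (P : 'M[R[i]]_n) (S : 'cV[R[i]]_n -> Prop) : Prop :=
  [/\ hermitian_op P, P *m P = P & forall v, S v <-> P *m v = v].

(* the eigenvalues of M with multiplicity: the roots of its characteristic
   polynomial *)
Definition eigen_roots n (M : 'M[R[i]]_n) : seq R[i] :=
  sval (closed_field_poly_normal (char_poly M)).

(* spectral radius = max |a| over eigenvalues a (0 for n = 0) *)
Definition spectral_radius n (M : 'M[R[i]]_n) : R[i] :=
  \big[Num.max/0]_(a <- eigen_roots M) `|a|.

End Defs.

(* Main.v *)
Require Import Defs.
From mathcomp Require Import all_boot all_order all_algebra.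
From mathcomp Require Import complex reals.
From mathcomp Require Import ring lra.
Import Order.TTheory GRing.Theory Num.Theory.
Local Open Scope ring_scope.
Set Implicit Arguments. Unset Strict Implicit. Unset Printing Implicit Defensive.

Section Aux.
Variable R : realType.
Local Notation C := R[i].

Definition ip n (u v : 'cV[C]_n) : C := (adjmx u *m v) 0 0.

Lemma adjmxE m n (M : 'M[C]_(m, n)) i j : adjmx M i j = (M j i)^*.
Proof. by rewrite /adjmx !mxE. Qed.

Lemma adjmxM m n p (A : 'M[C]_(m, n)) (B : 'M[C]_(n, p)) :
  adjmx (A *m B) = adjmx B *m adjmx A.
Proof. by rewrite /adjmx map_mxM trmx_mul. Qed.

Lemma adjmxK m n (A : 'M[C]_(m, n)) : adjmx (adjmx A) = A.
Proof. by apply/matrixP => i j; rewrite !adjmxE conjCK. Qed.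

Lemma ipE n (u v : 'cV[C]_n) : ip u v = \sum_i (u i 0)^* * v i 0.
Proof. by rewrite /ip mxE; apply: eq_bigr => i _; rewrite adjmxE. Qed.

Lemma ipMl n (M : 'M[C]_n) u v : ip (M *m u) v = ip u (adjmx M *m v).
Proof. by rewrite /ip adjmxM mulmxA. Qed.

Lemma ipC n (u v : 'cV[C]_n) : ip v u = (ip u v)^*.
Proof.
rewrite !ipE rmorph_sum; apply: eq_bigr => i _.
by rewrite rmorphM /= (@conjCK _ (u i 0)) mulrC.
Qed.

Lemma ipDr n (u v w : 'cV[C]_n) : ip u (v + w) = ip u v + ip u w.
Proof. by rewrite !ipE -big_split; apply: eq_bigr => i _; rewrite mxE mulrDr. Qed.

Lemma ipDl n (u v w : 'cV[C]_n) : ip (u + v) w = ip u w + ip v w.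
Proof. by rewrite !ipE -big_split; apply: eq_bigr => i _; rewrite mxE rmorphD mulrDl. Qed.

Lemma ipBr n (u v w : 'cV[C]_n) : ip u (v - w) = ip u v - ip u w.
Proof. by rewrite !ipE -sumrB; apply: eq_bigr => i _; rewrite !mxE mulrBr. Qed.

Lemma ipBl n (u v w : 'cV[C]_n) : ip (u - v) w = ip u w - ip v w.
Proof. by rewrite !ipE -sumrB; apply: eq_bigr => i _; rewrite !mxE rmorphB mulrBl. Qed.

Lemma ipZr n a (u v : 'cV[C]_n) : ip u (a *: v) = a * ip u v.
Proof. by rewrite !ipE mulr_sumr; apply: eq_bigr => i _; rewrite mxE mulrCA. Qed.

Lemma ipZl n a (u v : 'cV[C]_n) : ip (a *: u) v = a^* * ip u v.
Proof. by rewrite !ipE mulr_sumr; apply: eq_bigr => i _; rewrite mxE rmorphM mulrA. Qed.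

Lemma ip0r n (u : 'cV[C]_n) : ip u 0 = 0.
Proof. by rewrite ipE big1 // => i _; rewrite mxE mulr0. Qed.

Lemma ipnorm n (v : 'cV[C]_n) : ip v v = \sum_i `|v i 0| ^+ 2.
Proof. by rewrite ipE; apply: eq_bigr => i _; rewrite normCKC. Qed.

Lemma ip_ge0 n (v : 'cV[C]_n) : 0 <= ip v v.
Proof. by rewrite ipnorm; apply: sumr_ge0 => i _; rewrite exprn_ge0. Qed.

Lemma ip_eq0 n (v : 'cV[C]_n) : ip v v = 0 -> v = 0.
Proof.
rewrite ipnorm => /eqP; rewrite psumr_eq0 => [/allP H|i _]; last by rewrite exprn_ge0.
apply/matrixP => i j; rewrite ord1 mxE.
have := H i (mem_index_enum _); rewrite expf_eq0 /= normr_eq0.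
by move/eqP.
Qed.

Lemma vnormE n (v : 'cV[C]_n) : vnorm v = sqrtC (ip v v).
Proof. by rewrite /vnorm ipnorm. Qed.

Lemma real_ge0 (x : C) : 0 <= x -> x = ((complex.Re x)%:C)%C.
Proof. by move=> /ger0_real /RRe_real ->. Qed.


Lemma adjmx_tc m n (M : 'M[C]_(m, n)) : adjmx M = map_mx Num.conj (M^T).
Proof. by apply/matrixP => i j; rewrite !mxE. Qed.

Lemma adj_delta n (i : 'I_n) : adjmx (delta_mx i (0 : 'I_1) : 'cV[C]_n) = delta_mx 0 i.
Proof.
apply/matrixP => a b; rewrite adjmxE !mxE.
by case: (a == 0); case: (b == i); rewrite /= ?rmorph0 ?rmorph1.
Qed.

Lemma diag_delta n (D : 'rV[C]_n) i :
  diag_mx D *m (delta_mx i (0 : 'I_1) : 'cV[C]_n) = D 0 i *: delta_mx i 0.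
Proof.
apply/matrixP => a b; rewrite mul_diag_mx !mxE.
by case: eqP => [->|_]; rewrite ?mulr0 ?mulr1 ?andFb ?mulr0.
Qed.

Lemma spec_bound n (A P : 'M[C]_n) (lam : R) :
  hermitian_op A ->
  (forall mu, is_eigenvalue A mu -> mu != 1 -> `|mu| <= (lam%:C)%C) ->
  orth_proj_onto P (eigenspace_pred A 1) -> 0 <= lam ->
  forall y, P *m y = 0 -> ip (A *m y) (A *m y) <= ((lam ^+ 2)%:C)%C * ip y y.
Proof.
move=> hA hev [hPh hPP hP] lam0 y hPy.
have hN : A \is normalmx.
  by apply/normalmxP; rewrite -adjmx_tc hA.
have /orthomx_spectralP hS := hN.
set V := spectralmx A in hS; set D := spectral_diag A in hS.
have hVu : V \is unitarymx := spectral_unitarymx A.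
have hinv : invmx V = adjmx V by rewrite invmx_unitary // adjmx_tc.
have hVV : V *m adjmx V = 1%:M by rewrite adjmx_tc; apply/unitarymxP.
have hVV' : adjmx V *m V = 1%:M by apply: mulmx1C.
rewrite hinv in hS.
set y' := V *m y.
have hAy : A *m y = adjmx V *m (diag_mx D *m y') by rewrite {1}hS /y' !mulmxA.
have hl : ip (A *m y) (A *m y) = ip (diag_mx D *m y') (diag_mx D *m y').
  by rewrite hAy ipMl adjmxK mulmxA hVV mul1mx.
have hr : ip y y = ip y' y' by rewrite /y' ipMl mulmxA hVV' mul1mx.
rewrite hl hr !ipE mulr_sumr; apply: ler_sum => i _.
have -> : (diag_mx D *m y') i 0 = D 0 i * y' i 0 by rewrite mul_diag_mx mxE.
have key : y' i 0 = 0 \/ `|D 0 i| <= (lam%:C)%C.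
  set e := adjmx V *m delta_mx i (0 : 'I_1).
  have he : A *m e = D 0 i *: e.
    rewrite {1}hS /e -!mulmxA (mulmxA V) hVV mul1mx diag_delta.
    by rewrite -!scalemxAr.
  have he0 : e != 0.
    apply/eqP => h; have : V *m e = delta_mx i 0 by rewrite /e mulmxA hVV mul1mx.
    rewrite h mulmx0 => /matrixP/(_ i 0); rewrite !mxE !eqxx /= => /eqP.
    by rewrite eq_sym oner_eq0.
  have [D1|D1] := eqVneq (D 0 i) 1.
    left.
    have hPe : P *m e = e by apply/hP; rewrite /eigenspace_pred he D1.
    have -> : y' i 0 = ip e y.
      rewrite /ip /e adjmxM adj_delta adjmxK -mulmxA -rowE /y'.
      by rewrite !mxE.
    by rewrite -hPe ipMl hPh hPy ip0r.
  by right; apply: hev => //; exists e.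
have hy0 : 0 <= (y' i 0)^* * y' i 0 by rewrite -normCKC exprn_ge0.
case: key => [h0|hD]; first by rewrite h0 !mulr0.
rewrite -normCKC normrM exprMn -normCKC.
apply: ler_pM => //; rewrite ?exprn_ge0 //.
rewrite rmorphXn /= !expr2; apply: ler_pM => //.
Qed.


Lemma ge0_realC (a : C) : 0 <= a -> exists2 r : R, 0 <= r & a = (r%:C)%C.
Proof.
move=> h; exists (complex.Re a); last exact: real_ge0.
by move: h; rewrite lecE => /andP[_].
Qed.

Lemma eig_core n (U A P : 'M[C]_n) (lam d : R) (z : C) (w : 'cV[C]_n) :
  0 <= lam -> lam < 1 -> 0 <= d -> d < 1 ->
  unitary_op U -> hermitian_op A ->
  (forall mu, is_eigenvalue A mu -> mu != 1 -> `|mu| <= (lam%:C)%C) ->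
  orth_proj_onto P (eigenspace_pred A 1) ->
  (forall v, eigenspace_pred A 1 v -> vnorm (P *m (U *m v)) <= (d%:C)%C * vnorm v) ->
  w != 0 -> (U *m A) *m w = z *: w ->
  exists (r X Y NA Nu Nv T : R), 0 <= r /\ `|z| = (r%:C)%C /\ 0 <= X /\ 0 <= Y /\ 0 < X + Y /\
    0 <= Nu /\ 0 <= Nv /\ 0 <= NA /\
    r ^+ 2 * (X + Y) = X + NA /\ r ^+ 2 * X = Nu + Nv + T /\
    (forall t : R, 0 <= t -> 0 <= t ^+ 2 * Nu + Nv - t * T) /\
    Nu <= d ^+ 2 * X /\ Nv <= lam ^+ 2 * Y /\ NA <= lam ^+ 2 * Y.
Proof.
move=> l0 l1 d0 d1 hU hA hev hPr hd w0 hUA.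
have [hPh hPP hP] := hPr.
have hUU : adjmx U *m U = 1%:M by apply: mulmx1C.
have Uiso v : ip (U *m v) (U *m v) = ip v v by rewrite ipMl mulmxA hUU mul1mx.
have Pcontr q : ip (P *m q) (P *m q) <= ip q q.
  have e1 : ip (P *m q) (q - P *m q) = 0.
    by rewrite ipMl hPh mulmxBr mulmxA hPP subrr ip0r.
  have e2 : ip (q - P *m q) (P *m q) = 0 by rewrite ipC e1 rmorph0.
  have -> : ip q q = ip (P *m q) (P *m q) + ip (q - P *m q) (q - P *m q).
    have -> : ip q q = ip ((q - P *m q) + P *m q) ((q - P *m q) + P *m q) by rewrite subrK.
    rewrite (ipDl (q - P *m q) (P *m q)) (ipDr (q - P *m q) (q - P *m q) (P *m q)).
    by rewrite (ipDr (P *m q) (q - P *m q) (P *m q)) e1 e2 addr0 add0r addrC.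
  by rewrite lerDl ip_ge0.
set x := P *m w; set y := w - P *m w.
have hPx : P *m x = x by rewrite /x mulmxA hPP.
have hAx : A *m x = x by have := (hP x).2 hPx; rewrite /eigenspace_pred scale1r.
have hPy : P *m y = 0 by rewrite /y mulmxBr mulmxA hPP subrr.
have hxy : ip x y = 0 by rewrite /x /y ipMl hPh mulmxBr mulmxA hPP subrr ip0r.
have hyx : ip y x = 0 by rewrite ipC hxy rmorph0.
have hw : w = x + y by rewrite /x /y addrC subrK.
set Ay := A *m y.
have hxAy : ip x Ay = 0.
  have : ip (A *m x) y = ip x (A *m y) by rewrite ipMl hA.
  by rewrite hAx hxy => <-.
have hAyx : ip Ay x = 0 by rewrite ipC hxAy rmorph0.
have hAw : A *m w = x + Ay by rewrite {1}hw mulmxDr hAx.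
have Nw : ip w w = ip x x + ip y y.
  by rewrite {1 2}hw (ipDl x y) (ipDr x x y) (ipDr y x y) hxy hyx addr0 add0r.
have Na : ip (A *m w) (A *m w) = ip x x + ip Ay Ay.
  by rewrite hAw (ipDl x Ay) (ipDr x x Ay) (ipDr Ay x Ay) hxAy hAyx addr0 add0r.
have hz : ip (z *: w) (z *: w) = `|z| ^+ 2 * ip w w by rewrite ipZl ipZr mulrA normCKC.
have E1 : `|z| ^+ 2 * (ip x x + ip y y) = ip x x + ip Ay Ay.
  by rewrite -Nw -hz -hUA -mulmxA Uiso Na.
set u := P *m (U *m x); set v := P *m (U *m Ay).
have hzx : z *: x = u + v.
  have : P *m ((U *m A) *m w) = z *: x by rewrite hUA -scalemxAr.
  by rewrite -mulmxA hAw !mulmxDr => <-.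
have E2 : `|z| ^+ 2 * ip x x = ip u u + ip v v + (ip u v + ip v u).
  have hzx2 : ip (z *: x) (z *: x) = `|z| ^+ 2 * ip x x.
    by rewrite ipZl ipZr mulrA normCKC.
  rewrite -hzx2 hzx (ipDl u v) (ipDr u u v) (ipDr v u v).
  move: (ip u u) (ip u v) (ip v u) (ip v v) => a b c e; ring.
have Tt (t : R) : 0 <= t -> 0 <= (t ^+ 2)%:C%C * ip u u + ip v v - (t%:C)%C * (ip u v + ip v u).
  move=> t0.
  have ct : ((t%:C)%C)^* = (t%:C)%C.
    by apply/CrealP; apply: ger0_real; rewrite -[0]/((0:R)%:C)%C lecR.
  have := ip_ge0 ((t%:C)%C *: u - v).
  rewrite ipBl !ipBr !ipZl !ipZr ct rmorphXn /=.
  move: ((t%:C)%C) (ip u u) (ip u v) (ip v u) (ip v v) => tc a b c e.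
  suff -> : tc ^+ 2 * a + e - tc * (b + c) = tc * (tc * a) - tc * b - (tc * c - e) by [].
  ring.
have hu : ip u u <= ((d ^+ 2)%:C)%C * ip x x.
  have hv := hd x; rewrite !vnormE in hv.
  have := hv (eq_trans hAx (esym (scale1r x))).
  move=> h.
  have : sqrtC (ip u u) ^+ 2 <= ((d%:C)%C * sqrtC (ip x x)) ^+ 2.
    rewrite !expr2; apply: ler_pM => //; rewrite sqrtC_ge0 ip_ge0 //.
  by rewrite sqrtCK exprMn sqrtCK rmorphXn.
have hNA : ip Ay Ay <= ((lam ^+ 2)%:C)%C * ip y y.
  exact: (spec_bound hA hev hPr l0 hPy).
have hv : ip v v <= ((lam ^+ 2)%:C)%C * ip y y.
  by apply: le_trans (Pcontr _) _; rewrite Uiso.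
have Treal : ip u v + ip v u = ((complex.Re (ip u v + ip v u))%:C)%C.
  rewrite RRe_real //; apply/CrealP.
  by rewrite rmorphD /= -!ipC addrC.
have [r r0 hr] := ge0_realC (normr_ge0 z).
have [X X0 hX] := ge0_realC (ip_ge0 x).
have [Y Y0 hY] := ge0_realC (ip_ge0 y).
have [NA NA0 hNA'] := ge0_realC (ip_ge0 Ay).
have [Nu Nu0 hNu] := ge0_realC (ip_ge0 u).
have [Nv Nv0 hNv] := ge0_realC (ip_ge0 v).
set T := complex.Re (ip u v + ip v u) in Treal.
have F1 : 0 < X + Y.
  rewrite lt_neqAle addr_ge0 // andbT; apply/eqP => h.
  have : ip w w = 0 by rewrite Nw hX hY -rmorphD -h.
  by move/ip_eq0/eqP; rewrite (negPf w0).
have F2 : r ^+ 2 * (X + Y) = X + NA.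
  apply: complexI; move: E1; rewrite hr hX hY hNA'.
  by rewrite -!rmorphXn -!rmorphD -!rmorphM.
have F3 : r ^+ 2 * X = Nu + Nv + T.
  apply: complexI; move: E2; rewrite hr hX hNu hNv Treal.
  by rewrite -!rmorphXn -!rmorphD -!rmorphM.
have F4 : forall t : R, 0 <= t -> 0 <= t ^+ 2 * Nu + Nv - t * T.
  move=> t t0; have := Tt t t0; rewrite hNu hNv Treal.
  by rewrite -!rmorphM -!rmorphD -!rmorphB -[0]/((0:R)%:C)%C lecR.
have F5 : Nu <= d ^+ 2 * X by move: hu; rewrite hNu hX -rmorphM lecR.
have F6 : Nv <= lam ^+ 2 * Y by move: hv; rewrite hNv hY -rmorphM lecR.
have F7 : NA <= lam ^+ 2 * Y by move: hNA; rewrite hNA' hY -rmorphM lecR.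
by exists r, X, Y, NA, Nu, Nv, T; do !split.
Qed.

End Aux.

Lemma real_core (R : realType) (c l2 K X Y s : R) :
  0 <= c -> c < 1 -> 0 <= l2 -> l2 < 1 -> 0 < K ->
  0 <= X -> 0 <= Y -> 0 < X + Y -> 0 <= s ->
  s * X <= c * X + K * Y -> s * (X + Y) <= X + l2 * Y ->
  s <= 1 - (1 - (1 - (1 - c) * (1 - l2))) ^+ 2 / (4 * (K + 1)).
Proof.
move=> c0 c1 l0 l1 K0 X0 Y0 XY0 s0 h1 h2.
set m := 1 - (1 - c) * (1 - l2).
have mc : c <= m by rewrite /m; nra.
have ml : l2 <= m by rewrite /m; nra.
have m1 : m < 1 by rewrite /m; nra.
set del := (1 - m) ^+ 2 / (4 * (K + 1)).
have hdel : del * (4 * (K + 1)) = (1 - m) ^+ 2.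
  by rewrite /del mulfVK // gt_eqF //; lra.
have del0 : 0 < del.
  by rewrite /del divr_gt0 // ?exprn_gt0 //; lra.
have del2 : del <= (1 - m) / 2 by nra.
rewrite leNgt; apply/negP => hs.
have hsm : m < s by lra.
have hc : (s - c) * X <= K * Y by lra.
have hl : (s - l2) * Y <= (1 - s) * X by nra.
have Xp : 0 < X.
  rewrite lt_neqAle X0 andbT; apply/eqP => hX0.
  rewrite -hX0 mulr0 in hl. nra.
have Yp : 0 < Y by nra.
have h3 : (s - l2) * (s - c) * X * Y <= K * (1 - s) * X * Y.
  have : (s - l2) * Y * ((s - c) * X) <= (1 - s) * X * (K * Y).
    apply: ler_pM => //; nra.
  lra.
have h4 : (s - l2) * (s - c) <= K * (1 - s).
  have XY : 0 < X * Y by nra.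
  by rewrite -(ler_pM2r XY); lra.
have h5 : (s - m) ^+ 2 <= K * (1 - s) by nra.
nra.
Qed.


Section F.
Variable R : realType.
Definition tB (d : R) := (1 - d ^+ 2) / 2.
Definition cB (d : R) := (1 + tB d) * d ^+ 2.
Definition KB (d : R) := (1 + tB d) / tB d.
Definition delB (lam d : R) :=
  (1 - (1 - (1 - cB d) * (1 - lam ^+ 2))) ^+ 2 / (4 * (KB d + 1)).
Definition fB (lam d : R) := 1 - delB lam d / 2.

Lemma params (lam d : R) : 0 <= lam -> lam < 1 -> 0 <= d -> d < 1 ->
  [/\ 0 < tB d, 0 <= cB d, cB d < 1, 0 < KB d & 0 < delB lam d /\ delB lam d <= 1].
Proof.
move=> l0 l1 d0 d1.
have t0 : 0 < tB d by rewrite /tB; nra.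
have c0 : 0 <= cB d by rewrite /cB; nra.
have e1 : d ^+ 2 < 1 by nra.
have e2 : 0 < (1 - d ^+ 2) * (2 - d ^+ 2) by apply: mulr_gt0; lra.
have c1 : cB d < 1 by rewrite /cB /tB; nra.
have K0 : 0 < KB d by rewrite /KB divr_gt0 //; lra.
split => //.
set m := 1 - (1 - cB d) * (1 - lam ^+ 2).
have ll : lam ^+ 2 < 1 by nra.
have pp : 0 < (1 - cB d) * (1 - lam ^+ 2) by apply: mulr_gt0; lra.
have m1 : m < 1 by rewrite /m; lra.
have pp1 : (1 - cB d) * (1 - lam ^+ 2) <= 1.
  have := @ler_pM _ (1 - cB d) 1 (1 - lam ^+ 2) 1; rewrite mulr1; apply; nra.
have m0 : 0 <= m by rewrite /m; lra.
have hd : delB lam d * (4 * (KB d + 1)) = (1 - m) ^+ 2.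
  by rewrite /delB -/m mulfVK // gt_eqF //; lra.
split.
  by rewrite /delB -/m divr_gt0 // ?exprn_gt0 //; lra.
nra.
Qed.

Lemma r_bound (lam d r X Y NA Nu Nv T : R) :
  0 <= lam -> lam < 1 -> 0 <= d -> d < 1 ->
  0 <= r -> 0 <= X -> 0 <= Y -> 0 < X + Y ->
  0 <= Nu -> 0 <= Nv -> 0 <= NA ->
  r ^+ 2 * (X + Y) = X + NA -> r ^+ 2 * X = Nu + Nv + T ->
  (forall t : R, 0 <= t -> 0 <= t ^+ 2 * Nu + Nv - t * T) ->
  Nu <= d ^+ 2 * X -> Nv <= lam ^+ 2 * Y -> NA <= lam ^+ 2 * Y ->
  r <= fB lam d.
Proof.
move=> l0 l1 d0 d1 r0 X0 Y0 XY Nu0 Nv0 NA0 E1 E2 E3 E4 E5 E6.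
have [t0 c0 c1 K0 [del0 del1]] := params l0 l1 d0 d1.
have l2 : lam ^+ 2 < 1 by nra.
have hT := E3 _ (ltW t0).
set t := tB d in t0 hT.
have h1 : t * (r ^+ 2 * X) <= t * (cB d * X) + (1 + t) * Y.
  rewrite E2 /cB -/t.
  have a1 : t * (1 + t) * Nu <= t * (1 + t) * (d ^+ 2 * X).
    by apply: ler_wpM2l => //; apply: mulr_ge0; lra.
  have a2 : lam ^+ 2 * Y <= Y by rewrite ler_piMl //; nra.
  have a3 : (1 + t) * Nv <= (1 + t) * Y by apply: ler_wpM2l; lra.
  nra.
have h2 : r ^+ 2 * X <= cB d * X + KB d * Y.
  have e : t * ((1 + t) / t * Y) = (1 + t) * Y.
    by rewrite mulrA [t * _]mulrC divfK // gt_eqF.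
  by rewrite /KB -/t -(ler_pM2l t0) mulrDr e.
have h3 : r ^+ 2 * (X + Y) <= X + lam ^+ 2 * Y by rewrite E1; lra.
have := real_core c0 c1 (exprn_ge0 2 l0) l2 K0 X0 Y0 XY (exprn_ge0 2 r0) h2 h3.
rewrite -/(delB lam d) /fB => hs.
rewrite leNgt; apply/negP => hr.
have : (1 - delB lam d / 2) ^+ 2 < r ^+ 2.
  rewrite !expr2; apply: ltr_pM; try lra.
nra.
Qed.
End F.


Lemma char_poly_trmx (F : fieldType) n (M : 'M[F]_n) : char_poly M^T = char_poly M.
Proof.
rewrite /char_poly -det_tr; congr (\det _).
by apply/matrixP => i j; rewrite !mxE eq_sym.
Qed.

Lemma root_eigen_col (F : fieldType) n (M : 'M[F]_n) a : root (char_poly M) a ->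
  exists2 w : 'cV[F]_n, w != 0 & M *m w = a *: w.
Proof.
rewrite -char_poly_trmx -eigenvalue_root_char => /eigenvalueP [v hv v0].
exists v^T; first by rewrite trmx_eq0.
by rewrite -[M]trmxK -trmx_mul hv; apply/matrixP => i j; rewrite !mxE.
Qed.

Lemma eigen_roots_root (R : realType) n (M : 'M[R[i]]_n) a :
  a \in eigen_roots M -> root (char_poly M) a.
Proof.
rewrite /eigen_roots; case: closed_field_poly_normal => r /= hr ha.
rewrite hr rootZ; last by rewrite (monicP (char_poly_monic M)) oner_eq0.
by rewrite root_prod_XsubC.
Qed.

Lemma max_le (R : realType) (s : seq R[i]) (c : R[i]) : 0 <= c ->
  (forall a, a \in s -> `|a| <= c) -> \big[Num.max/0]_(a <- s) `|a| <= c.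
Proof.
move=> c0 h; rewrite big_seq.
elim/big_rec: _ => // i x hi hx.
rewrite /Num.max /Order.max; case: ifP => _ //; exact: h.
Qed.


Local Open Scope complex_scope.

Theorem mainTheorem10 (R : realType) :
  forall lam d : R, 0 <= lam -> lam < 1 -> 0 <= d -> d < 1 ->
  exists f : R, f < 1 /\
    forall (n : nat) (U A P : 'M[R[i]]_n),
      unitary_op U -> hermitian_op A ->
      is_eigenvalue A 1 ->
      (forall mu, is_eigenvalue A mu -> mu != 1 -> `|mu| <= lam%:C) ->
      orth_proj_onto P (eigenspace_pred A 1) ->
      (forall v : 'cV[R[i]]_n, eigenspace_pred A 1 v ->
         vnorm (P *m (U *m v)) <= d%:C * vnorm v) ->
      spectral_radius (U *m A) <= f%:C.
Proof.
move=> lam d l0 l1 d0 d1.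
have [_ _ _ _ [del0 del1]] := params l0 l1 d0 d1.
exists (fB lam d); split; first by rewrite /fB; lra.
move=> n U A P hU hA _ hev hPr hd.
apply: max_le; first by rewrite lecR /fB; lra.
move=> a /eigen_roots_root /root_eigen_col [w w0 hw].
have [r [X [Y [NA [Nu [Nv [T [r0 [hr [X0 [Y0 [XY [Nu0 [Nv0 [NA0 [E1 [E2 [E3 [E4 [E5 E6]]]]]]]]]]]]]]]]]]]]
  := eig_core l0 l1 d0 d1 hU hA hev hPr hd w0 hw.
rewrite hr lecR.
exact: (r_bound l0 l1 d0 d1 r0 X0 Y0 XY Nu0 Nv0 NA0 E1 E2 E3 E4 E5 E6).
Qed.
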